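(* In a PL+C model, suppose $\sum_{h\in\mathcal U}p_h\ge\alpha k$ for some $\alpha>1$. Let $i,j\in\mathcal U$ with $i\ne j$, and let $\Pr'_{PLC}$ denote PL+C probabilities when $p_j$ is replaced by some $p_j'\in(p_j,1]$ (all other parameters unchanged). Then $$\Pr'_{PLC}(\mathcal R_{i=1})\le\Pr_{PLC}(\mathcal R_{i=1})+\frac{(\alpha e^{1-\alpha})^k}{1-(\alpha e^{1-\alpha})^k}.$$ Moreover, if at least $k+1$ of the consideration probabilities equal $1$ after the replacement, then $\Pr'_{PLC}(\mathcal R_{i=1})\le\Pr_{PLC}(\mathcal R_{i=1})$.
   Context: PL+C model: universe $\mathcal U=\{1,\dots,n\}$, fixed ranking length $k\le n$. Each item $h$ has a utility $u_h\in\mathbb R$ and a consideration probability $p_h\in(0,1]$. A consideration set $C$ is drawn by including each item independently with probability $p_h$, conditioned on $|C|\ge k$: $\Pr_C(C)=\frac{1}{z_{k,p}}\prod_{h\in C}p_h\prod_{h\notin C}(1-p_h)$ for $|C|\ge k$ (with $z_{k,p}$ the normalizing constant), and $0$ otherwise. Given $C$, a length-$k$ ranking $r$ has probability $\Pr_{PL}(r\mid C)=\prod_{t=1}^k \frac{\exp(u_{r_t})}{\sum_{h\in C\setminus\{r_1,\dots,r_{t-1}\}}\exp(u_h)}$ if all $r_t\in C$, else $0$. $\Pr_{PLC}(r)=\sum_C\Pr_C(C)\Pr_{PL}(r\mid C)$, and for a set $R$ of rankings $\Pr_{PLC}(R)=\sum_{r\in R}\Pr_{PLC}(r)$. $\mathcal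 R_{i=1}$ is the set of length-$k$ rankings with $i$ in the first position. *)

(* Defs.v *)
From HB Require Import structures.
From mathcomp Require Import all_boot all_order all_algebra.
From mathcomp Require Import reals.
From mathcomp Require Import sequences exp.
Set Implicit Arguments. Unset Strict Implicit. Unset Printing Implicit Defensive.
Import Order.TTheory GRing.Theory Num.Theory.
Local Open Scope ring_scope.

(* PL+C model. Universe = 'I_n, consideration sets = {set 'I_n},
   length-k rankings = duplicate-free k.-tuples of items. *)
Section PLC.
Variables (R : realType) (n k : nat) (u p : 'I_n -> R).

Definition cweight (C : {set 'I_n}) : R :=
  (\prod_(h in C) p h) * (\prod_(h in ~: C) (1 - p h)).

Definition zkp : R := \sum_(C : {set 'I_n} | (k <= #|C|)%N) cweight C.

Definition PrC (C : {set 'I_n}) : R :=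
  if (k <= #|C|)%N then cweight C / zkp else 0.

Definition before (r : k.-tuple 'I_n) (t : 'I_k) : {set 'I_n} :=
  [set tnth r s | s : 'I_k & (s < t)%N].

Definition PrPL (r : k.-tuple 'I_n) (C : {set 'I_n}) : R :=
  if [forall t : 'I_k, tnth r t \in C] then
    \prod_(t < k) (expR (u (tnth r t)) /
                   \sum_(h in C :\: before r t) expR (u h))
  else 0.

Definition PrPLC (r : k.-tuple 'I_n) : R :=
  \sum_(C : {set 'I_n}) PrC C * PrPL r C.

Definition PrFirst (i : 'I_n) : R :=
  \sum_(r : k.-tuple 'I_n | uniq r && (ohead r == Some i)) PrPLC r.

End PLC.

(* Main.v *)
Require Import Defs.
From HB Require Import structures.
From mathcomp Require Import all_boot all_order all_algebra.
From mathcomp Require Import reals.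
From mathcomp Require Import sequences exp.
From mathcomp Require Import ring lra zify.
Import Order.TTheory GRing.Theory Num.Theory.
Local Open Scope ring_scope.
Set Implicit Arguments. Unset Strict Implicit. Unset Printing Implicit Defensive.

Section Aux.
Variable R : realType.

Lemma sum_tupleS (T : finType) m (F : seq T -> R) :
  \sum_(r : m.+1.-tuple T) F r = \sum_(x : T) \sum_(r : m.-tuple T) F (x :: r).
Proof.
rewrite pair_big /=.
rewrite (reindex (fun pr : T * m.-tuple T => [tuple of pr.1 :: pr.2])) /=.
  by apply: eq_bigr => -[x r].
exists (fun r : m.+1.-tuple T => (thead r, [tuple of behead r])).
  by move=> [x r] _ /=; rewrite theadE; congr pair; apply: val_inj.
by move=> r _; apply: val_inj => /=; rewrite [in RHS](tuple_eta r).
Qed.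

Variables (n : nat) (u : 'I_n -> R).

Definition S (D : {set 'I_n}) := \sum_(h in D) expR (u h).

Fixpoint PLs (D : {set 'I_n}) (s : seq 'I_n) : R :=
  match s with [::] => 1 | x :: s' => expR (u x) / S D * PLs (D :\ x) s' end.

Definition Q (D : {set 'I_n}) (s : seq 'I_n) := if uniq s && all (fun y => y \in D) s then PLs D s else 0.

Lemma all_D1 (D : {set 'I_n}) x s :
  (x \notin s) && all (fun y => y \in D) s = all (fun y => y \in D :\ x) s.
Proof.
elim: s => [|y s IH] //=; rewrite in_cons negb_or -IH !inE eq_sym.
by case: (y == x); case: (x \in s); case: (y \in D); case: (all _ _).
Qed.

Lemma Qcons (D : {set 'I_n}) x s :
  Q D (x :: s) = (x \in D)%:R * (expR (u x) / S D) * Q (D :\ x) s.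
Proof.
rewrite /Q /= -all_D1.
by case: (x \in D); case: (x \notin s); case: (uniq s); case: (all _ _);
  rewrite /= ?andbF ?mul0r ?mul1r ?mulr0.
Qed.

Lemma S_gt0 (D : {set 'I_n}) x : x \in D -> 0 < S D.
Proof.
move=> xD; rewrite /S (bigD1 x) //= ltr_pwDl ?expR_gt0 //.
by apply: sumr_ge0 => h _; apply/ltW/expR_gt0.
Qed.

Lemma sumQ m (D : {set 'I_n}) : (m <= #|D|)%N -> \sum_(r : m.-tuple 'I_n) Q D r = 1.
Proof.
elim: m D => [|m IH] D hm.
  rewrite (eq_bigr (fun _ => 1)); last first.
    by move=> r _; rewrite (tuple0 r) /Q /=.
  by rewrite sumr_const card_tuple expn0.
have [x xD] : exists x, x \in D.
  by apply/set0Pn; rewrite -card_gt0; apply: leq_trans hm.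
rewrite sum_tupleS.
rewrite (eq_bigr (fun y => (y \in D)%:R * (expR (u y) / S D))); last first.
  move=> y _; under eq_bigr do rewrite Qcons.
  rewrite -mulr_sumr; case yD: (y \in D); last by rewrite !mul0r.
  rewrite IH ?mulr1 //.
  by rewrite (cardsD1 y D) yD add1n ltnS in hm.
under eq_bigr do rewrite mulrA.
rewrite -mulr_suml.
have -> : \sum_i (i \in D)%:R * expR (u i) = S D.
  rewrite /S [RHS]big_mkcond /=; apply: eq_bigr => y _.
  by case: (y \in D); rewrite ?mul1r ?mul0r.
rewrite divff //.
by rewrite gt_eqF // (S_gt0 xD).
Qed.

Lemma sumQhead k' (C : {set 'I_n}) i : (k'.+1 <= #|C|)%N ->
  \sum_(r : k'.+1.-tuple 'I_n) (ohead r == Some i)%:R * Q C r =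
  (i \in C)%:R * (expR (u i) / S C).
Proof.
move=> hk; rewrite (@sum_tupleS _ k' (fun s => (ohead s == Some i)%:R * Q C s)).
rewrite (bigD1 i) //= [X in _ + X]big1 ?addr0; last first.
  move=> x xi; apply: big1 => r _.
  by rewrite /= (inj_eq (@Some_inj _)) (negbTE xi) mul0r.
under eq_bigr do rewrite eqxx mul1r Qcons.
rewrite -mulr_sumr; case iC: (i \in C); last by rewrite !mul0r.
rewrite [X in _ * X](_ : _ = 1) ?mulr1 //; apply: (@sumQ k' (C :\ i)).
by rewrite (cardsD1 i C) iC add1n ltnS in hk.
Qed.

Lemma PLs_prod (D : {set 'I_n}) (s : seq 'I_n) x0 :
  \prod_(0 <= t < size s)
     (expR (u (nth x0 s t)) / \sum_(h in D :\: [set y in take t s]) expR (u h))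
  = PLs D s.
Proof.
elim: s D => [|x s IH] D /=; first by rewrite big_nil.
rewrite big_nat_recl //= -IH; congr (_ * _).
  by congr (_ / _); apply: eq_bigl => h; rewrite !inE.
apply: eq_bigr => t _; congr (_ / _); apply: eq_bigl => h.
by rewrite !inE negb_or; case: (h == x); case: (h \in take t s).
Qed.

Lemma before_take k (r : k.-tuple 'I_n) (t : 'I_k) :
  before r t = [set y in take t r].
Proof.
pose x0 := tnth r t.
apply/setP => y; rewrite !inE; apply/imsetP/idP.
  move=> [s]; rewrite inE => st ->.
  rewrite (tnth_nth x0) -(nth_take x0 st); apply: mem_nth.
  by rewrite size_take size_tuple ltn_min st ltn_ord.
move=> yin; have := yin; rewrite -index_mem size_take size_tuple => hi.
have hik : (index y (take t r) < k)%N by apply: leq_trans hi (geq_minr _ _).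
exists (Ordinal hik); first by rewrite inE /= (leq_trans hi (geq_minl _ _)).
rewrite (tnth_nth x0) /= -(nth_take x0 (leq_trans hi (geq_minl _ _))).
by rewrite nth_index.
Qed.

Lemma PrPL_Q k (r : k.-tuple 'I_n) C :
  PrPL u r C = if all (fun y => y \in C) r then PLs C r else 0.
Proof.
rewrite /PrPL; case: (@all_tnthP _ _ (fun y => y \in C) r) => [h|h]; last first.
  by case: forallP => // H; case: h => t; apply: H.
case: forallP => H; last by case: H.
case: k r H h => [|k'] r H h; first by rewrite (tuple0 r) big_ord0.
rewrite -(PLs_prod C r (thead r)) size_tuple big_mkord.
apply: eq_bigr => t _; rewrite (tnth_nth (thead r)) before_take //.
Qed.

End Aux.

Section Prob.
Variables (R : realType) (n : nat).
Implicit Types (p : 'I_n -> R) (C : {set 'I_n}).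

Definition E p (F : {set 'I_n} -> R) := \sum_C cweight p C * F C.

Definition valid p := forall h, 0 <= p h <= 1.

Lemma cweightE p C :
  cweight p C = \prod_h (if h \in C then p h else 1 - p h).
Proof.
rewrite /cweight (big_mkcond (fun h => h \in C)) (big_mkcond (fun h => h \in ~: C)).
rewrite -big_split /=; apply: eq_bigr => h _; rewrite inE.
by case: (h \in C); rewrite /= ?mulr1 ?mul1r.
Qed.

Lemma cweight_ge0 p C : valid p -> 0 <= cweight p C.
Proof.
move=> vp; rewrite cweightE; apply: prodr_ge0 => h _.
by have /andP[h0 h1] := vp h; case: (h \in C) => //; rewrite subr_ge0.
Qed.

Lemma sum_cweight p : \sum_C cweight p C = 1.
Proof.
under eq_bigr do rewrite cweightE.
rewrite -(@bigA_distr R 0 1 *%R +%R _ (fun h => p h) (fun h => 1 - p h)) /=.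
by apply: big1 => h _; rewrite addrC subrK.
Qed.

Lemma E_ge0 p F : valid p -> (forall C, 0 <= F C) -> 0 <= E p F.
Proof. by move=> vp hF; apply: sumr_ge0 => C _; rewrite mulr_ge0 ?cweight_ge0. Qed.

Lemma E_add p F G : E p (fun C => F C + G C) = E p F + E p G.
Proof. by rewrite /E -big_split; apply: eq_bigr => C _; rewrite mulrDr. Qed.

Lemma E_opp p F : E p (fun C => - F C) = - E p F.
Proof. by rewrite /E -sumrN; apply: eq_bigr => C _; rewrite mulrN. Qed.

Lemma E_le p F G : valid p -> (forall C, F C <= G C) -> E p F <= E p G.
Proof.
by move=> vp hF; apply: ler_sum => C _; rewrite ler_wpM2l ?cweight_ge0.
Qed.

Section Mono.
Variable j : 'I_n.

Definition W p C := \prod_(h | h != j) (if h \in C then p h else 1 - p h).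
Definition tog C := if j \in C then C :\ j else j |: C.

Lemma togK : involutive tog.
Proof.
move=> C; rewrite /tog; case jC: (j \in C).
  by rewrite !inE eqxx /= setD1K.
by rewrite !inE eqxx /= setU1K ?jC.
Qed.

Lemma W_U1 p C : W p (j |: C) = W p C.
Proof.
by apply: eq_bigr => h hj; rewrite !inE (negbTE hj).
Qed.

Lemma Erep p F : E p F =
  \sum_(C : {set 'I_n} | j \notin C) W p C * ((1 - p j) * F C + p j * F (j |: C)).
Proof.
rewrite /E (bigID (fun C => j \in C)) /= addrC.
rewrite [X in _ + X](reindex_inj (can_inj togK)) /=.
rewrite [X in _ + X](eq_bigl (fun C => j \notin C)); last first.
  by move=> C; rewrite /tog; case: (j \in C); rewrite !inE eqxx.
have hw D : cweight p D = (if j \in D then p j else 1 - p j) * W p D.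
  by rewrite cweightE (bigD1 j).
rewrite -big_split /=; apply: eq_bigr => C jC.
rewrite /tog (negbTE jC) !hw W_U1 !inE eqxx (negbTE jC) /=.
ring.
Qed.

Lemma E_mono p p' F : valid p -> valid p' ->
  (forall h, h != j -> p' h = p h) -> p j <= p' j ->
  (forall C, F (j |: C) <= F C) -> E p' F <= E p F.
Proof.
move=> vp vp' hpp' hj hF; rewrite !Erep; apply: ler_sum => C _.
have -> : W p' C = W p C.
  by apply: eq_bigr => h hh; rewrite hpp'.
apply: ler_wpM2l.
  apply: prodr_ge0 => h _; have /andP[h0 h1] := vp h.
  by case: (h \in C) => //; rewrite subr_ge0.
have h1 := hF C.
rewrite -subr_ge0.
have -> : (1 - p j) * F C + p j * F (j |: C) - ((1 - p' j) * F C + p' j * F (j |: C))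
  = (p' j - p j) * (F C - F (j |: C)) by ring.
by rewrite mulr_ge0 // subr_ge0.
Qed.
End Mono.


Lemma chernoff p (alpha : R) k : valid p -> 1 < alpha ->
  alpha * k%:R <= \sum_h p h ->
  E p (fun C => (#|C| < k)%N%:R) <= (alpha * expR (1 - alpha)) ^+ k.
Proof.
move=> vp ha hs.
have a0 : 0 < alpha by apply: lt_trans ha.
pose t := alpha^-1.
have t0 : 0 < t by rewrite invr_gt0.
have t1 : t < 1 by rewrite invf_lt1.
have step : E p (fun C => (#|C| < k)%N%:R) <=
    alpha ^+ k * E p (fun C => t ^+ #|C|).
  rewrite /E mulr_sumr; apply: ler_sum => C _.
  rewrite mulrCA; apply: ler_wpM2l; first exact: cweight_ge0.
  case: ltnP => hC /=.
    rewrite /t exprVn ler_pdivlMr ?exprn_gt0 // mul1r ler_eXn2l //.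
    exact: ltnW.
  by rewrite mulr_ge0 // exprn_ge0 // ltW.
have prodE : E p (fun C => t ^+ #|C|) = \prod_h (t * p h + (1 - p h)).
  rewrite (@bigA_distr R 0 1 *%R +%R _ (fun h => t * p h) (fun h => 1 - p h)) /=.
  rewrite /E; apply: eq_bigr => C _.
  rewrite cweightE -prodr_const [X in _ * X]big_mkcond /= -big_split /=.
  by apply: eq_bigr => h _; case: (h \in C); rewrite ?mulr1 // mulrC.
apply: (le_trans step); rewrite prodE.
have h2 : \prod_h (t * p h + (1 - p h)) <= expR ((t - 1) * \sum_h p h).
  rewrite mulr_sumr expR_sum; apply: ler_prod => h _.
  have /andP[h0 h1] := vp h.
  apply/andP; split; first by nra.
  have -> : t * p h + (1 - p h) = 1 + (t - 1) * p h by ring.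
  exact: expR_ge1Dx.
have h3 : expR ((t - 1) * \sum_h p h) <= expR (1 - alpha) ^+ k.
  rewrite -expRM_natr ler_expR.
  have -> : (1 - alpha) * k%:R = (t - 1) * (alpha * k%:R).
    by rewrite /t mulrA [(_ - 1) * alpha]mulrBl mulVf ?gt_eqF // mul1r.
  by rewrite ler_nM2l ?subr_lt0.
rewrite exprMn; apply: ler_wpM2l; first by rewrite exprn_ge0 // ltW.
exact: le_trans h2 h3.
Qed.

End Prob.

Section Main.
Variables (R : realType) (n k : nat) (u : 'I_n -> R) (i : 'I_n).
Hypothesis hk : (0 < k)%N.

Definition f (C : {set 'I_n}) : R := (i \in C)%:R * (expR (u i) / S u C).
Definition ind (C : {set 'I_n}) : R := (k <= #|C|)%N%:R.
Definition cind (C : {set 'I_n}) : R := (#|C| < k)%N%:R.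

Lemma zkpE p : zkp k p = E p ind.
Proof.
rewrite /zkp /E big_mkcond /=; apply: eq_bigr => C _; rewrite /ind.
by case: (k <= #|C|)%N; rewrite ?mulr1 ?mulr0.
Qed.

Lemma G_E (C : {set 'I_n}) : (k <= #|C|)%N ->
  \sum_(r : k.-tuple 'I_n | uniq r && (ohead r == Some i)) PrPL u r C = f C.
Proof.
case: k hk => // k' _ hC.
rewrite big_mkcond /= /f -(sumQhead u i hC); apply: eq_bigr => r _.
rewrite PrPL_Q /Q; case: (uniq r); case: (ohead r == Some i); case: (all _ _);
  by rewrite /= ?mul1r ?mul0r.
Qed.

Lemma PrFirstE p : PrFirst k u p i = E p (fun C => ind C * f C) / zkp k p.
Proof.
rewrite /PrFirst /PrPLC exchange_big /= /E mulr_suml; apply: eq_bigr => C _.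
rewrite -mulr_sumr /PrC /ind; case hC: (k <= #|C|)%N.
  by rewrite G_E // mul1r mulrAC.
by rewrite !mul0r mulr0 mul0r.
Qed.

Lemma S_ge0 (C : {set 'I_n}) : 0 <= S u C.
Proof. by apply: sumr_ge0 => h _; apply/ltW/expR_gt0. Qed.

Lemma f_ge0 (C : {set 'I_n}) : 0 <= f C.
Proof.
rewrite /f; case: (i \in C); rewrite ?mul0r // mul1r.
by rewrite divr_ge0 ?S_ge0 // ltW ?expR_gt0.
Qed.

Lemma f_le1 (C : {set 'I_n}) : f C <= 1.
Proof.
rewrite /f; case iC: (i \in C); rewrite ?mul0r // mul1r.
rewrite ler_pdivrMr ?(S_gt0 u iC) // mul1r /S (bigD1 i) //= lerDl.
by apply: sumr_ge0 => h _; apply/ltW/expR_gt0.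
Qed.

Lemma S_U1 j (C : {set 'I_n}) : S u C <= S u (j |: C).
Proof.
case jC: (j \in C); first by rewrite (setUidPr _) ?sub1set.
rewrite /S big_setU1 ?jC //= lerDr; exact/ltW/expR_gt0.
Qed.

Lemma f_mono j (C : {set 'I_n}) : i != j -> f (j |: C) <= f C.
Proof.
move=> ij; rewrite /f !inE (negbTE ij) /=.
case iC: (i \in C); rewrite ?mul0r // !mul1r.
have S0 := S_gt0 u iC.
have S1 : 0 < S u (j |: C) by apply: lt_le_trans S0 (S_U1 j C).
rewrite ler_pM2l ?expR_gt0 // lef_pV2 ?posrE //; exact: S_U1.
Qed.

Lemma card_U1 j (C : {set 'I_n}) : (#|C| <= #|j |: C|)%N.
Proof. by apply: subset_leq_card; apply: subsetUr. Qed.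

Lemma final_arith (A A' z z' q : R) :
  0 <= A -> 0 <= A' -> 0 < z -> z <= z' -> A' <= A + q ->
  A' / z' <= A / z + q / z.
Proof.
move=> A0 A'0 z0 zz' hA.
have z'0 : 0 < z' by apply: lt_le_trans zz'.
apply: (@le_trans _ _ (A' / z)).
  by rewrite ler_wpM2l // lef_pV2 ?posrE.
by rewrite -mulrDl ler_wpM2r // invr_ge0 ltW.
Qed.

Lemma key p p' j : valid p -> valid p' -> i != j ->
  (forall h, h != j -> p' h = p h) -> p j <= p' j ->
  0 < zkp k p ->
  PrFirst k u p' i <= PrFirst k u p i + E p cind / zkp k p.
Proof.
move=> vp vp' ij hpp' hj z0.
rewrite !PrFirstE.
apply: final_arith => //.
- by apply: E_ge0 => // C; rewrite mulr_ge0 ?f_ge0 // /ind.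
- by apply: E_ge0 => // C; rewrite mulr_ge0 ?f_ge0 // /ind.
- rewrite !zkpE -[_ <= _]lerN2 -!E_opp.
  apply: (E_mono (j := j)) => // C; rewrite lerN2 /ind.
  case: leqP => //= hC; rewrite (leq_trans hC (card_U1 j C)) //.
- apply: (@le_trans _ _ (E p' (fun C => ind C * f C + cind C))).
    by apply: E_le => // C; rewrite lerDl /cind.
  rewrite -E_add; apply: (E_mono (j := j)) => // C.
  rewrite /ind /cind; case: (leqP k #|C|) => hC.
    rewrite (leq_trans hC (card_U1 j C)) /= ltnNge (leq_trans hC (card_U1 j C)).
    by rewrite /= !mul1r !addr0; apply: f_mono.
  case: (leqP k #|j |: C|) => hC' /=; rewrite ?mul1r ?mul0r ?add0r ?addr0 //.
  exact: f_le1.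
Qed.

Lemma zq p : valid p -> zkp k p + E p cind = 1.
Proof.
move=> vp; rewrite zkpE -E_add /E -(sum_cweight p); apply: eq_bigr => C _.
by rewrite /ind /cind; case: leqP; rewrite /= ?addr0 ?add0r mulr1.
Qed.

End Main.

Lemma q_le_ratio (R : realType) (q X : R) :
  0 <= q -> q <= X -> X < 1 -> q / (1 - q) <= X / (1 - X).
Proof.
move=> q0 qX X1.
have h1 : 0 < 1 - X by rewrite subr_gt0.
have h2 : 0 < 1 - q by rewrite subr_gt0; apply: le_lt_trans X1.
rewrite ler_pdivrMr // mulrAC ler_pdivlMr //; nra.
Qed.

Lemma x_lt1 (R : realType) (alpha : R) : 1 < alpha -> alpha * expR (1 - alpha) < 1.
Proof.
move=> ha.
have h : 1 + (alpha - 1) < expR (alpha - 1).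
  by apply: expR_gt1Dx; rewrite subr_eq0 gt_eqF.
rewrite addrC subrK in h.
rewrite -opprB expRN ltr_pdivrMr ?expR_gt0 // mul1r //.
Qed.

Unset Implicit Arguments. Set Strict Implicit.

Theorem lemma5 (R : realType) (n k : nat) (u p p' : 'I_n -> R)
  (alpha : R) (i j : 'I_n) :
  (0 < k)%N -> (k <= n)%N ->
  (forall h, 0 < p h <= 1) ->
  1 < alpha ->
  alpha * k%:R <= \sum_(h < n) p h ->
  i != j ->
  (forall h, h != j -> p' h = p h) ->
  p j < p' j <= 1 ->
  PrFirst k u p' i <=
    PrFirst k u p i
    + (alpha * expR (1 - alpha)) ^+ k / (1 - (alpha * expR (1 - alpha)) ^+ k)
  /\
  ((k < #|[set h | p' h == 1%R]|)%N -> PrFirst k u p' i <= PrFirst k u p i).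
Proof.
move=> hk hkn hp ha hs ij hpp' /andP[hj1 hj2].
have vp : valid p by move=> h; have /andP[h0 h1] := hp h; rewrite ltW.
have vp' : valid p'.
  move=> h; case: (eqVneq h j) => [->|hh]; last by rewrite hpp'.
  have /andP[h0 _] := hp j.
  by rewrite hj2 andbT; apply: ltW (lt_trans h0 hj1).
have K := key u hk vp vp' ij hpp' (ltW hj1).
have ZQ : zkp k p + E p (cind R k) = 1 by apply: zq.
have q0 : 0 <= E p (cind R k) by apply: E_ge0 => // C; rewrite /cind.
split.
  have qX : E p (cind R k) <= (alpha * expR (1 - alpha)) ^+ k.
    exact: (chernoff vp ha hs).
  have x0 : 0 <= alpha * expR (1 - alpha).
    by rewrite mulr_ge0 ?ltW ?expR_gt0 // (lt_trans ltr01 ha).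
  have X1 : (alpha * expR (1 - alpha)) ^+ k < 1.
    by rewrite exprn_ilt1 ?x_lt1 // -lt0n.
  have zE : zkp k p = 1 - E p (cind R k) by rewrite -ZQ addrK.
  have z0 : 0 < zkp k p by rewrite zE subr_gt0; apply: le_lt_trans X1.
  apply: (le_trans (K z0)); rewrite lerD2l zE.
  exact: q_le_ratio.
move=> hT.
have qz : E p (cind R k) = 0.
  rewrite /E big1 // => C _; rewrite /cind; case: ltnP => hC; last by rewrite mulr0.
  have : ~~ (([set h | p' h == 1] :\ j) \subset C).
    apply/negP => sub; have := subset_leq_card sub.
    have e := cardsD1 j [set h | p' h == 1].
    have l := leq_b1 (j \in [set h | p' h == 1]) => sc.
    have h1 : (#|[set h | p' h == 1%R]| <= #|C|.+1)%N.
      by rewrite e -add1n leq_add.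
    have h2 := leq_trans h1 hC.
    by rewrite leqNgt hT in h2.
  case/subsetPn => h hT' hC'; rewrite !inE in hT'; case/andP: hT' => hj /eqP hp1.
  rewrite hpp' // in hp1.
  rewrite /cweight (bigD1 h (_ : h \in ~: C)) /=; last by rewrite inE.
  by rewrite hp1 subrr mul0r mulr0 mul0r.
have z1 : zkp k p = 1 by rewrite -ZQ qz addr0.
have z0 : 0 < zkp k p by rewrite z1 ltr01.
by have := K z0; rewrite qz mul0r addr0.
Qed.
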